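(* Let $n\ge1$, $\delta>0$, $N$ a multiple of $n$, $L=N/n$, $q_n=\frac{n\delta+\sqrt{n^2\delta^2+4n\delta}}2$, $\zeta=(\delta n+4)/(\delta n)$, $\rho=\frac{\sqrt\zeta-1}{\sqrt\zeta+1}$. Let $H\in\mathbb R^{N\times N}$ be the block tridiagonal matrix with $L\times L$ blocks of size $n\times n$, diagonal blocks $(\delta n+2)I_n$ except the last, which is $(q_n+1)I_n$, and blocks $-I_n$ on the first super- and sub-block-diagonals. Then $H$ is invertible and $Y=H^{-1}$ has the block form $Y=(y_{ij}I_n)_{i,j=1}^{L}$ with scalars $y_{ij}$ satisfying $$y_{t,t+\tau}\ge\frac{1-\rho}{\delta n+2}\rho^{\tau}>0\quad\text{for all }1\le t\le t+\tau\le L,\ \tau\ge0.$$ *)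

(* Defs.v *)
From HB Require Import structures.
From mathcomp Require Import all_boot all_order all_algebra.
Set Implicit Arguments. Unset Strict Implicit. Unset Printing Implicit Defensive.
Import Order.TTheory GRing.Theory Num.Theory.
Local Open Scope ring_scope.

Definition qn (R : rcfType) (n : nat) (delta : R) : R :=
  (n%:R * delta + Num.sqrt (n%:R ^+ 2 * delta ^+ 2 + 4 * n%:R * delta)) / 2.

Definition zeta (R : rcfType) (n : nat) (delta : R) : R :=
  (delta * n%:R + 4) / (delta * n%:R).

Definition rho (R : rcfType) (n : nat) (delta : R) : R :=
  (Num.sqrt (zeta n delta) - 1) / (Num.sqrt (zeta n delta) + 1).

(* Index i : 'I_N lies in block i %/ n (0-based) at position i %% n. *)
Definition Hmat (R : rcfType) (N n : nat) (delta : R) : 'M[R]_N :=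
  \matrix_(i < N, j < N)
    if (i %% n == j %% n)%N then
      let a := (i %/ n)%N in let b := (j %/ n)%N in
      if a == b then
        (if a == (N %/ n).-1 then qn n delta + 1 else delta * n%:R + 2)
      else if (a.+1 == b) || (b.+1 == a) then -1 else 0
    else 0.

(* Main.v *)
Require Import Defs.
From HB Require Import structures.
From mathcomp Require Import all_boot all_order all_algebra.
From mathcomp Require Import ring lra.
Import Order.TTheory GRing.Theory Num.Theory.
Local Open Scope ring_scope.
From mathcomp Require Import zify.
Lemma rho_facts (R : rcfType) (n : nat) (delta : R) :
  (1 <= n)%N -> 0 < delta ->
  [/\ 0 < rho n delta, rho n delta < 1,
      delta * n%:R + 2 = rho n delta + (rho n delta)^-1 &
      qn n delta + 1 = (rho n delta)^-1].
Proof.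
move=> hn hd.
set d := delta * n%:R.
have d0 : 0 < d by rewrite /d mulr_gt0 // ltr0n.
have dn0 : d != 0 by rewrite gt_eqF.
have hz : zeta n delta = (d + 4) / d by [].
have z1 : 1 < zeta n delta.
  by rewrite hz ltr_pdivlMr // mul1r ltrDl.
set Z := Num.sqrt (zeta n delta).
have Z1 : 1 < Z by rewrite /Z -sqrtr1 ltr_sqrt // (lt_trans ltr01).
have Z2 : Z ^+ 2 = (d + 4) / d by rewrite /Z sqr_sqrtr // (le_trans ler01) // ltW.
have hr : rho n delta = (Z - 1) / (Z + 1) by [].
have Zp0 : Z + 1 != 0 by rewrite gt_eqF //; lra.
have Zm0 : Z - 1 != 0 by rewrite gt_eqF // subr_gt0.
have Zpos : 0 < Z + 1 by lra.
have hq : qn n delta = (d + d * Z) / 2.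
  rewrite /qn /Z.
  have -> : n%:R ^+ 2 * delta ^+ 2 + 4 * n%:R * delta = d ^+ 2 * zeta n delta.
    rewrite hz /d; field.
    by rewrite pnatr_eq0 -lt0n hn (gt_eqF hd).
  rewrite sqrtrM ?sqrtr_sqr ?sqr_ge0 // ger0_norm ?ltW // (mulrC (n%:R)).
  by [].
have Zd : Z ^+ 2 * d = d + 4 by rewrite Z2 mulfVK.
split.
- rewrite hr divr_gt0 //; lra.
- rewrite hr ltr_pdivrMr //; lra.
- rewrite hr invf_div.
  have -> : (Z - 1) / (Z + 1) + (Z + 1) / (Z - 1) = (2 * Z ^+ 2 + 2) / (Z ^+ 2 - 1).
    by field; rewrite Zm0 Zp0 andbT gt_eqF //; nra.
  rewrite Z2; field; rewrite dn0 /=.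
  rewrite gt_eqF //; lra.
- rewrite hq hr invf_div; apply: (mulfI Zm0).
  have -> : (Z - 1) * ((Z + 1) / (Z - 1)) = Z + 1 by field.
  have -> : (Z - 1) * ((d + d * Z) / 2 + 1) = (Z ^+ 2 * d - d + 2 * Z - 2) / 2 by field.
  by rewrite Zd; field.
Qed.

Section S.
Variable R : rcfType.
Definition ff (r : R) (t i : nat) : R :=
  r ^+ t * (r - r ^+ i * r ^+ i * r ^+ 3) / (1 - r ^+ 2).
Definition YY (r : R) (i j : nat) : R :=
  if (i <= j)%N then ff r (j - i) i else ff r (i - j) j.

Lemma YE1 r i t : YY r i (i + t) = ff r t i.
Proof. by rewrite /YY leq_addr addKn. Qed.
Lemma YE2 r j t : YY r (j + t) j = ff r t j.
Proof.
rewrite /YY; case: ifP => h; last by rewrite addKn.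
have -> : t = 0%N by lia.
by rewrite addn0 subnn.
Qed.

Ltac fsolve r0 r1 := rewrite /ff !exprS ?expr0; field;
  rewrite ?mulr1; repeat (apply/andP; split); rewrite gt_eqF //; nra.

Lemma row_id r (L i j : nat) : 0 < r -> r < 1 -> (i < L)%N -> (j < L)%N ->
  (if i == L.-1 then r^-1 else r + r^-1) * YY r i j
  - (if (i.+1 < L)%N then YY r i.+1 j else 0)
  - (if (0 < i)%N then YY r i.-1 j else 0) = (i == j)%:R.
Proof.
move=> r0 r1 iL jL.
case: (ltngtP i j) => hij.
- have [t ej] : exists t, j = (i + t.+1)%N by exists (j - i.+1)%N; lia.
  subst j.
  have -> : (i == L.-1) = false by apply/eqP; lia.
  have -> : (i.+1 < L)%N by lia.
  rewrite YE1 -addSnnS YE1.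
  case: i {hij iL jL} => [|i] /=.
    by fsolve r0 r1.
  have -> : (i.+2 + t = i + t.+2)%N by lia.
  rewrite YE1; fsolve r0 r1.
- have [t ei] : exists t, i = (j + t.+1)%N by exists (i - j.+1)%N; lia.
  subst i.
  have -> : (0 < j + t.+1)%N by lia.
  rewrite YE2 -addnS YE2 /=.
  have -> : ((j + t.+1).-1 = j + t)%N by lia.
  rewrite YE2.
  case: eqP => hL.
    have -> : (j + t.+2 < L)%N = false by lia.
    by fsolve r0 r1.
  have -> : (j + t.+2 < L)%N by lia.
  by fsolve r0 r1.
- subst j; rewrite ?eqxx.
  have -> : YY r i i = ff r 0 i by rewrite -{2}(addn0 i) YE1.
  have -> : YY r i.+1 i = ff r 1 i by rewrite -addn1 YE2.
  case: i iL jL => [|i] iL _ /=.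
    case: eqP => hL.
      have -> : (1 < L)%N = false by lia.
      by fsolve r0 r1.
    have -> : (1 < L)%N by lia.
    by fsolve r0 r1.
  have -> : YY r i i.+1 = ff r 1 i by rewrite -addn1 YE1.
  case: eqP => hL.
    have -> : (i.+2 < L)%N = false by lia.
    by fsolve r0 r1.
  have -> : (i.+2 < L)%N by lia.
  by fsolve r0 r1.
Qed.
Lemma sum1 (g : nat -> R) L m :
  \sum_(0 <= b < L) (if b == m then g b else 0) = if (m < L)%N then g m else 0.
Proof.
elim: L => [|L IH]; first by rewrite big_geq.
rewrite big_nat_recr //= IH.
case: eqP => [->|hLm]; first by rewrite ltnn ltnSn add0r.
rewrite addr0.
have -> : (m < L.+1)%N = (m < L)%N by lia.
done.
Qed.

Lemma tri_sum (g : nat -> R) (cA : R) L a : (a < L)%N ->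
  \sum_(0 <= b < L)
     (if a == b then cA else if (a.+1 == b) || (b.+1 == a) then -1 else 0) * g b
  = cA * g a - (if (a.+1 < L)%N then g a.+1 else 0)
             - (if (0 < a)%N then g a.-1 else 0).
Proof.
move=> aL.
have E : forall b, (if a == b then cA else if (a.+1 == b) || (b.+1 == a) then -1 else 0) * g b
  = (if b == a then cA * g b else 0) - (if b == a.+1 then g b else 0)
    - (if b == a.-1 then (if (0 < a)%N then g b else 0) else 0).
  move=> b.
  case: (ltngtP a b) => h.
  - try (have -> : (b == a) = false by apply/eqP; lia).
    try (have -> : (b == a.-1) = false by apply/eqP; lia).
    try (have -> : (b.+1 == a) = false by apply/eqP; lia).
    rewrite orbF.
    case: eqP => h2; case: eqP => h3; try lia.
    + by rewrite mulN1r; ring.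
    + by rewrite mul0r; ring.
  - try (have -> : (b == a.+1) = false by apply/eqP; lia).
    try (have -> : (a.+1 == b) = false by apply/eqP; lia).
    rewrite /=.
    case: eqP => h2; case: eqP => h3; try lia.
    + have -> : (0 < a)%N by lia.
      by rewrite mulN1r; ring.
    + by rewrite mul0r; ring.
  - subst b; rewrite ?eqxx.
    try (have -> : (a == a.+1) = false by apply/eqP; lia).
    case: a aL => [|a] aL /=; first by ring.
    try (have -> : (a.+1 == a) = false by apply/eqP; lia).
    by ring.
under eq_bigr do rewrite E.
clear E.
rewrite !big_split /= !sumrN sum1 sum1 aL.
case: a aL => [|a] aL /=.
  rewrite big1 ?subr0 //.
  by move=> b _; case: (b == 0%N).
have -> : (a = a.+1.-1)%N by [].
rewrite sum1 /=.
have -> : (a < L)%N by lia.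
done.
Qed.

Lemma sum_blocks (F : nat -> R) L n p : (p < n)%N ->
  \sum_(0 <= k < (L * n)%N) (if (k %% n == p)%N then F (k %/ n)%N else 0)
  = \sum_(0 <= b < L) F b.
Proof.
move=> pn.
elim: L => [|L IH]; first by rewrite mul0n !big_geq.
rewrite big_nat_recr //= mulSnr (@big_cat_nat _ _ _ (L * n)%N) ?leq_addr // IH.
congr (_ + _).
rewrite -{1}(add0n (L * n)%N) big_addn addKn.
have -> : \sum_(0 <= i < n) (if ((i + L * n) %% n == p)%N then F ((i + L * n) %/ n)%N else 0)
   = \sum_(0 <= i < n) (if i == p then F L else 0).
  rewrite !big_nat; apply: eq_bigr => i /andP [_ iN].
  rewrite addnC modnMDl modn_small // divnMDl ?divn_small ?addn0 //; lia.
by rewrite sum1 pn.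
Qed.
End S.
Arguments ff {R}. Arguments YY {R}. Arguments YE1 {R}. Arguments YE2 {R}. Arguments row_id {R}.
Arguments sum1 {R}. Arguments tri_sum {R}. Arguments sum_blocks {R}.

Theorem lemma11 (R : rcfType) (n N : nat) (delta : R)
    (hn : (1 <= n)%N) (hdelta : 0 < delta) (hN : (n %| N)%N) :
  Hmat N n delta \in unitmx /\
  exists y : nat -> nat -> R,
    (forall i j : 'I_N,
        invmx (Hmat N n delta) i j =
        (if (i %% n == j %% n)%N then y (i %/ n)%N (j %/ n)%N else 0)) /\
    (forall t tau : nat, (t + tau < N %/ n)%N ->
        (1 - rho n delta) / (delta * n%:R + 2) * rho n delta ^+ tau
          <= y t (t + tau)%N /\
        0 < (1 - rho n delta) / (delta * n%:R + 2) * rho n delta ^+ tau).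
Proof.
have [r0 r1 ha hq] := @rho_facts R n delta hn hdelta.
set r := rho n delta in r0 r1 ha hq *.
case/dvdnP: hN => L hNL.
have NL : (N %/ n = L)%N by rewrite hNL mulnK.
pose Y := \matrix_(i < N, j < N)
  (if (i %% n == j %% n)%N then YY r (i %/ n)%N (j %/ n)%N else 0 : R).
have HY : Hmat N n delta *m Y = 1%:M.
  apply/matrixP => i j; rewrite !mxE.
  pose G (k : nat) : R :=
    (if (i %% n == k %% n)%N then
      (if (i %/ n == k %/ n)%N then
        (if (i %/ n == (N %/ n).-1)%N then qn n delta + 1 else delta * n%:R + 2)
       else if ((i %/ n).+1 == k %/ n)%N || ((k %/ n).+1 == i %/ n)%N then -1 else 0)
     else 0) *
    (if (k %% n == j %% n)%N then YY r (k %/ n)%N (j %/ n)%N else 0).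
  transitivity (\sum_(k < N) G k).
    by apply: eq_bigr => k _; rewrite !mxE.
  rewrite -(big_mkord xpredT G).
  have iL : (i %/ n < L)%N by rewrite ltn_divLR // -hNL.
  have jL : (j %/ n < L)%N by rewrite ltn_divLR // -hNL.
  case: (eqVneq (i %% n)%N (j %% n)%N) => hij.
  - pose F := (fun b => (if (i %/ n == b)%N then
          (if (i %/ n == L.-1)%N then qn n delta + 1 else delta * n%:R + 2)
        else if ((i %/ n).+1 == b)%N || (b.+1 == i %/ n)%N then -1 else 0)
         * YY r b (j %/ n)%N).
    transitivity (\sum_(0 <= k < (L * n)%N) (if (k %% n == i %% n)%N then
       F (k %/ n)%N else 0)).
      rewrite -hNL; apply: eq_bigr => k _; rewrite /G NL (eq_sym (i %% n)%N).
      by case: eqP => e; [rewrite e hij eqxx | rewrite mul0r].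
    rewrite sum_blocks ?ltn_pmod // /F (tri_sum (fun b => YY r b (j %/ n)%N)) //.
    rewrite hq ha row_id //.
    have -> : (i %/ n == j %/ n)%N = (i == j) => //.
    apply/eqP/eqP => e; last by rewrite e.
    by apply: val_inj; rewrite /= (divn_eq i n) (divn_eq j n) e hij.
  - rewrite big1.
      case: eqP => // e; move: hij; by rewrite e eqxx.
    move=> k _; rewrite /G.
    case: eqP => e1; last by rewrite mul0r.
    case: (k %% n =P j %% n)%N => e2; last by rewrite mulr0.
    by move: hij; rewrite e1 e2 eqxx.
have [Hu _] := mulmx1_unit HY.
split => //.
exists (YY r); split.
  move=> i j.
  have -> : invmx (Hmat N n delta) = Y.
    by rewrite -[invmx _]mulmx1 -HY mulmxA mulVmx // mul1mx.
  by rewrite mxE.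
move=> t tau; rewrite NL => _; rewrite YE1.
have P0 : 0 < r ^+ tau by rewrite exprn_gt0.
have rr : 0 < r + r^-1 by rewrite addr_gt0 // invr_gt0.
rewrite ha; split; last by rewrite mulr_gt0 // divr_gt0 // subr_gt0.
have x1 : r ^+ t * r ^+ t <= 1 by rewrite mulr_ile1 ?exprn_ge0 ?exprn_ile1 // ltW.
have x0 : 0 <= r ^+ t * r ^+ t by rewrite mulr_ge0 // exprn_ge0 // ltW.
have h1 : (1 - r) / (r + r^-1) <= r.
  rewrite ler_pdivrMr // mulrDr mulfV ?gt_eqF //; nra.
have h2 : r <= (r - r ^+ t * r ^+ t * r ^+ 3) / (1 - r ^+ 2).
  rewrite ler_pdivlMr; last by nra.
  have : 0 <= r ^+ 3 * (1 - r ^+ t * r ^+ t) by rewrite mulr_ge0 ?exprn_ge0 ?subr_ge0 // ltW.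
  have -> : r - r ^+ t * r ^+ t * r ^+ 3 = r * (1 - r ^+ 2) + r ^+ 3 * (1 - r ^+ t * r ^+ t) by ring.
  lra.
apply: (le_trans (y := r * r ^+ tau)); first by rewrite ler_pM2r.
by rewrite /ff -mulrA [X in _ <= X]mulrC ler_pM2r.
Qed.
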